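(* Let $\mathbb{H}$ be a reproducing kernel Hilbert space with inner product $\langle\cdot,\cdot\rangle$ and feature map $\phi$, let $\Sigma:=\operatorname{Var}\phi(X)$, and let $(X,A,Y)$ be jointly distributed with $Y=\langle\phi(X),y\rangle$ and $A=\langle\phi(X),a\rangle$ for some nonzero $y,a\in\mathbb{H}$, with $\operatorname{Var}(Y),\operatorname{Var}(A)>0$; let $\rho_{YA}$ be the correlation coefficient of $Y$ and $A$. Suppose $(X,\phi)$ is regular. Then: (i) there exists a (possibly randomized) representation $Z=g(X)$ with $\operatorname{Var}\mathbb{E}[A\mid Z]=0$ and $\operatorname{Var}\mathbb{E}[Y\mid Z]=\operatorname{Var}(Y)(1-\rho_{YA}^2)$; (ii) there exists a (possibly randomized) representation $Z=g(X)$ with $\operatorname{Var}\mathbb{E}[Y\mid Z]=\operatorname{Var}(Y)$ and $\operatorname{Var}\mathbb{E}[A\mid Z]=\operatorname{Var}(A)\rho_{YA}^2$; (iii) for every $\lambda\ge0$ there exists a (possibly randomized) representation $Z=g(X)$ with $$\lambda\operatorname{Var}\mathbb{E}[A\mid Z]-\operatorname{Var}\mathbb{E}[Y\mid Z]=\frac12\Big\{\lambda\operatorname{Var}(A)-\operatorname{Var}(Y)-\sqrt{\operatorname{Var}^2(Y)+\lambda^2\operatorname{Var}^2(A)-2\lambda\operatorname{Var}(A)\operatorname{Var}(Y)(2\rho_{YA}^2-1)}\Big\}.$$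
   Context: A (possibly randomized) representation is $Z=g(X,S)$ with auxiliary randomness $S$ independent of $(X,A,Y)$. $(X,\phi)$ is called regular if for every positive semidefinite operator $M$ with $0\preceq M\preceq\Sigma$ there exists a (possibly randomized) representation $Z=g(X)$ such that $\operatorname{Var}\mathbb{E}[\phi(X)\mid Z]=M$ (the covariance operator of $\mathbb{E}[\phi(X)\mid Z]$). *)

(* Defs.v *)
From HB Require Import structures.
From mathcomp Require Import all_boot all_order all_algebra.
From mathcomp Require Import all_classical all_reals all_analysis.

Set Implicit Arguments.
Unset Strict Implicit.
Unset Printing Implicit Defensive.

Import Order.TTheory GRing.Theory Num.Theory.
Local Open Scope classical_set_scope.
Local Open Scope ring_scope.

Section hilbert.
Context {R : realType} {H : lmodType R}.

Definition inner_product (ip : H -> H -> R) : Prop :=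
  [/\ (forall u v, ip u v = ip v u),
      (forall (c : R) u v w, ip (c *: u + v) w = c * ip u w + ip v w),
      (forall u, 0 <= ip u u)
    & (forall u, ip u u = 0 -> u = 0)].

Definition ipnorm (ip : H -> H -> R) (u : H) : R := Num.sqrt (ip u u).

Definition ip_complete (ip : H -> H -> R) : Prop :=
  forall u : nat -> H,
    (forall e : R, 0 < e -> exists N : nat, forall m n : nat,
        (N <= m)%N -> (N <= n)%N -> ipnorm ip (u m - u n) < e) ->
    exists l : H, forall e : R, 0 < e -> exists N : nat, forall n : nat,
        (N <= n)%N -> ipnorm ip (u n - l) < e.

Definition hilbert_space (ip : H -> H -> R) : Prop :=
  inner_product ip /\ ip_complete ip.

(* (H, ip) is a reproducing kernel Hilbert space of real functions on
   the set Xt: ev identifies H (linearly, injectively) with a space of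
   functions Xt -> R, and phi x is the representer of evaluation at x
   (the feature map, phi x = k(x, .)). *)
Definition RKHS {Xt : Type} (ip : H -> H -> R) (ev : H -> Xt -> R)
    (phi : Xt -> H) : Prop :=
  [/\ hilbert_space ip,
      (forall (c : R) f g x, ev (c *: f + g) x = c * ev f x + ev g x),
      injective ev
    & (forall f x, ev f x = ip f (phi x))].

End hilbert.

Section prob.
Context {R : realType} {dO : measure_display} {Om : measurableType dO}
  (P : probability Om R).

Definition indep_rv {d1 d2 : measure_display} {T1 : measurableType d1}
    {T2 : measurableType d2} (X : Om -> T1) (S : Om -> T2) : Prop :=
  forall (A : set T1) (B : set T2), measurable A -> measurable B ->
    P (X @^-1` A `&` S @^-1` B) = (P (X @^-1` A) * P (S @^-1` B))%E.

(* Z is a (possibly randomized) representation of X: Z = g(X, S) with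
   auxiliary randomness S independent of X (hence of (X, A, Y), A and Y
   being functions of X). *)
Definition representation {dX : measure_display} {TX : measurableType dX}
    (X : Om -> TX) {dZ : measure_display} {TZ : measurableType dZ}
    (Z : Om -> TZ) : Prop :=
  exists (dS : measure_display) (TS : measurableType dS) (S : Om -> TS)
         (g : TX * TS -> TZ),
    [/\ measurable_fun setT S, measurable_fun setT g, indep_rv X S
      & Z = g \o (fun w => (X w, S w))].

Definition cond_exp {dZ : measure_display} {TZ : measurableType dZ}
    (Z : Om -> TZ) (W : Om -> R) (h : TZ -> R) : Prop :=
  [/\ measurable_fun setT h,
      P.-integrable setT (fun w => (h (Z w))%:E)
    & forall B : set TZ, measurable B ->
        (\int[P]_(w in Z @^-1` B) (W w)%:E =
         \int[P]_(w in Z @^-1` B) (h (Z w))%:E)%E].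

Definition condvar_is {dZ : measure_display} {TZ : measurableType dZ}
    (Z : Om -> TZ) (W : Om -> R) (v : R) : Prop :=
  exists h : TZ -> R, cond_exp Z W h /\ 'V_P[h \o Z] = v%:E.

(* Var E[phi(X) | Z] = M (covariance operator of E[phi(X)|Z]), stated
   through the scalar projections: for all u v,
   <u, M v> = Cov(E[<phi(X),u> | Z], E[<phi(X),v> | Z]). *)
Definition condcov_is {H : lmodType R} (ip : H -> H -> R)
    {dZ : measure_display} {TZ : measurableType dZ}
    (Z : Om -> TZ) (Phi : H -> Om -> R) (M : H -> H) : Prop :=
  exists h : H -> TZ -> R,
    (forall u, cond_exp Z (Phi u) (h u)) /\
    (forall u v, covariance P (h u \o Z) (h v \o Z) = (ip u (M v))%:E).

Definition regular {H : lmodType R} (ip : H -> H -> R)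
    {dX : measure_display} {TX : measurableType dX}
    (X : Om -> TX) (phi : TX -> H) : Prop :=
  forall M : {linear H -> H},
    (forall u v, ip u (M v) = ip (M u) v) ->
    (forall u, 0 <= ip u (M u)) ->
    (forall u, ((ip u (M u))%:E <= 'V_P[fun w => ip (phi (X w)) u])%E) ->
    exists (dZ : measure_display) (TZ : measurableType dZ) (Z : Om -> TZ),
      representation X Z /\
      condcov_is ip Z (fun u w => ip (phi (X w)) u) M.

End prob.

(* Main.v *)
Require Import Defs.
From HB Require Import structures.
From mathcomp Require Import all_boot all_order all_algebra.
From mathcomp Require Import all_classical all_reals all_analysis.
From mathcomp Require Import ring lra.

Import Order.TTheory GRing.Theory Num.Theory.
Local Open Scope classical_set_scope.
Local Open Scope ring_scope.

Section bil.
Context {R : realType} {H : lmodType R} (b : H -> H -> R).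
Hypothesis bsym : forall u v, b u v = b v u.
Hypothesis blin : forall (c : R) u v w, b (c *: u + v) w = c * b u w + b v w.

Lemma b0l w : b 0 w = 0.
Proof using bsym blin.
have := blin 1 0 0 w; rewrite scaler0 addr0 mul1r => h.
by apply: (@addrI _ (b 0 w)); rewrite addr0 -h.
Qed.
Lemma bDl u v w : b (u + v) w = b u w + b v w.
Proof using bsym blin. by rewrite -[u]scale1r blin mul1r scale1r. Qed.
Lemma bZl c u w : b (c *: u) w = c * b u w.
Proof using bsym blin. by rewrite -[c *: u]addr0 blin b0l addr0. Qed.
Lemma bNl u w : b (- u) w = - b u w.
Proof using bsym blin. by rewrite -scaleN1r bZl mulN1r. Qed.
Lemma bBl u v w : b (u - v) w = b u w - b v w.
Proof using bsym blin. by rewrite bDl bNl. Qed.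
Lemma bDr u v w : b w (u + v) = b w u + b w v.
Proof using bsym blin. by rewrite bsym bDl !(bsym w). Qed.
Lemma bZr c u w : b w (c *: u) = c * b w u.
Proof using bsym blin. by rewrite bsym bZl bsym. Qed.
Lemma bNr u w : b w (- u) = - b w u.
Proof using bsym blin. by rewrite bsym bNl bsym. Qed.
Lemma bBr u v w : b w (u - v) = b w u - b w v.
Proof using bsym blin. by rewrite bDr bNr. Qed.

Lemma bquad r u v : b (r *: u + v) (r *: u + v) = r ^+ 2 * b u u + 2 * r * b u v + b v v.
Proof using bsym blin. rewrite bDl !bDr !bZl !bZr (bsym v u); ring. Qed.

Hypothesis bpsd : forall u, 0 <= b u u.

Lemma bCS u v : b u v ^+ 2 <= b u u * b v v.
Proof using bsym blin bpsd.
have q r : 0 <= r ^+ 2 * b u u + 2 * r * b u v + b v v by rewrite -bquad.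
move: (bpsd u) (bpsd v) q; set a := b u u; set c := b u v; set d := b v v => a0 d0 q.
have [a00|apos] := eqVneq a 0.
  rewrite a00 in q *.
  have [->|c0] := eqVneq c 0; first by rewrite expr0n mul0r.
  have := q (- (d + 1) / (2 * c)).
  have -> : (- (d + 1) / (2 * c)) ^+ 2 * 0 + 2 * (- (d + 1) / (2 * c)) * c + d = -1 by field.
  lra.
have {}apos : 0 < a by rewrite lt_def apos.
have := q (- c / a).
rewrite -(ler_pM2r apos) mul0r.
have -> : ((- c / a) ^+ 2 * a + 2 * (- c / a) * c + d) * a = a * d - c ^+ 2 by field; rewrite gt_eqF.
lra.
Qed.
End bil.

Definition epsn {R : realType} (n : nat) : R := (n.+1%:R)^-1.
Lemma epsn_gt0 {R : realType} n : 0 < @epsn R n.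
Proof. by rewrite /epsn invr_gt0 ltr0Sn. Qed.

Section misc.
Context {R : realType}.
Lemma small_inv (e : R) : 0 < e -> exists N : nat, forall n, (N <= n)%N -> epsn n < e.
Proof.
rewrite /epsn.
move=> e0; exists (Num.Def.archi_bound e^-1) => n Nn.
have h : e^-1 < n.+1%:R.
  apply: (lt_le_trans (archi_boundP _)); first by rewrite invr_ge0 ltW.
  by rewrite ler_nat; apply: leq_trans Nn _.
rewrite -[e]invrK ltf_pV2 // posrE ?ltr0Sn ?invr_gt0 //.
Qed.

Lemma sq_le (x e : R) : 0 < e -> x ^+ 2 <= e ^+ 2 -> - e <= x /\ x <= e.
Proof. move=> e0 h; split; nra. Qed.

Lemma quad0 (q g : R) : 0 <= q -> (forall r, 0 <= r ^+ 2 * q + 2 * r * g) -> g = 0.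
Proof.
move=> q0 h; have := h (- g / (q + 1)).
have q1 : q + 1 != 0 by rewrite gt_eqF // ltr_wpDl.
have -> : (- g / (q + 1)) ^+ 2 * q + 2 * (- g / (q + 1)) * g =
   - (g ^+ 2 * (q + 2)) / (q + 1) ^+ 2 by field.
rewrite pmulr_lge0 ?invr_gt0 ?exprn_gt0 ?ltr_wpDl // => h2.
apply/eqP; rewrite -sqrf_eq0; apply/eqP; nra.
Qed.
End misc.
Arguments small_inv {R} {e}.


Section riesz.
Context {R : realType} {H : lmodType R} (ip : H -> H -> R).
Hypothesis hip : inner_product ip.
Hypothesis hcomp : ip_complete ip.
Variable L : H -> R.
Hypothesis Llin : forall (c : R) u v, L (c *: u + v) = c * L u + L v.
Variable K : R.
Hypothesis K0 : 0 <= K.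
Hypothesis Lb : forall u, L u ^+ 2 <= K * ip u u.

Let ipsym : forall u v, ip u v = ip v u. Proof. by case: hip. Qed.
Let iplin : forall (c : R) u v w, ip (c *: u + v) w = c * ip u w + ip v w.
Proof. by case: hip. Qed.
Let ippos : forall u, 0 <= ip u u. Proof. by case: hip. Qed.

Let L0 : L 0 = 0.
Proof.
have := Llin 1 0 0; rewrite scaler0 addr0 mul1r => h.
by apply: (@addrI _ (L 0)); rewrite addr0 -h.
Qed.
Let LD u v : L (u + v) = L u + L v.
Proof. by rewrite -[u]scale1r Llin mul1r scale1r. Qed.
Let LZ c u : L (c *: u) = c * L u.
Proof. by rewrite -[c *: u]addr0 Llin L0 addr0. Qed.
Let LN u : L (- u) = - L u.
Proof. by rewrite -scaleN1r LZ mulN1r. Qed.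
Let LB u v : L (u - v) = L u - L v.
Proof. by rewrite LD LN. Qed.

Let F u := ip u u - 2 * L u.

Let Fexp d w : F (d + w) = F w + 2 * ip d w + ip d d - 2 * L d.
Proof.
rewrite /F LD (bDl ip ipsym iplin) !(bDr ip ipsym iplin) (ipsym w d); ring.
Qed.

Let Fpar x y : 2 * (F x + F y) = 4 * F (2^-1 *: (x + y)) + ip (x - y) (x - y).
Proof.
rewrite /F (bBl ip ipsym iplin) !(bBr ip ipsym iplin).
rewrite LZ LD (bZl ip ipsym iplin) (bZr ip ipsym iplin) (bDl ip ipsym iplin) !(bDr ip ipsym iplin).
rewrite (ipsym y x); field; done.
Qed.

Lemma riesz : exists w, forall u, ip u w = L u.
Proof.
have Flb u : - K <= F u.
  have := Lb u; have := ippos u; rewrite /F => h1 h2.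
  suff : 2 * L u <= ip u u + K by lra.
  rewrite leNgt; apply/negP => h.
  have h3 : (ip u u + K) ^+ 2 < (2 * L u) ^+ 2.
    have hh : 0 <= ip u u + K by rewrite addr_ge0.
    nra.
  have := sqr_ge0 (ip u u - K); nra.
pose S := range F.
have hS : has_inf S.
  split; first by exists (F 0), 0.
  by exists (- K) => _ [u _ <-]; apply: Flb.
pose m := inf S.
have mle u : m <= F u by apply: ge_inf; [case: hS | exists u].
have hseq n : exists u, F u < m + epsn n.
  have e0 := @epsn_gt0 R n.
  have [_ [u _ <-] h] := inf_adherent e0 hS.
  by exists u.
have [us hus] := choice hseq.
have cauchy n k : ip (us n - us k) (us n - us k) <= 2 * (epsn n + epsn k).
  have := Fpar (us n) (us k); have := mle (2^-1 *: (us n + us k)); have := hus n; have := hus k.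
  set X := ip _ _; set a := epsn n; set b := epsn k.
  set A := F (us n); set B := F (us k); set C := F _.
  clear hus mle hseq; move: X a b A B C m => X a b A B C m'; idtac.
lra.
have [w hw] : exists w, forall e : R, 0 < e -> exists N : nat, forall n : nat,
        (N <= n)%N -> ipnorm ip (us n - w) < e.
  apply: hcomp => e e0.
  have [N hN] := small_inv (divr_gt0 (mulr_gt0 e0 e0) (ltr0n _ 4)).
  exists N => n k Nn Nk.
  rewrite /ipnorm -[e]ger0_norm ?ltW // -sqrtr_sqr ltr_sqrt ?exprn_gt0 //.
  rewrite expr2; move: (cauchy n k) (hN n Nn) (hN k Nk);
lra.
have Fw : F w <= m.
  apply/ler_addgt0Pr => del del0.
  pose eps := del / 3.
  have eps0 : 0 < eps by rewrite divr_gt0.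
  have [n1 hn1] := small_inv eps0.
  pose t := eps ^+ 2 / (4 * (ip w w + K + 1)).
  have den0 : 0 < 4 * (ip w w + K + 1).
    by rewrite mulr_gt0 // ltr_wpDl // addr_ge0.
  have t0 : 0 < t by rewrite divr_gt0 // exprn_gt0.
  have st0 : 0 < Num.sqrt t by rewrite sqrtr_gt0.
  have [N hN] := hw _ st0.
  pose n := maxn N n1.
  have := hN n (leq_maxl _ _); rewrite /ipnorm ltr_sqrt // => hd.
  have := hn1 n (leq_maxr _ _) => hn.
  have := hus n; rewrite -[us n](subrK w) Fexp.
  set d := us n - w.
  have cs1 := bCS ip ipsym iplin ippos d w.
  have cs2 := Lb d.
  have ht : t * (4 * (ip w w + K + 1)) = eps ^+ 2 by rewrite /t divfK ?gt_eqF.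
  have pw := ippos w; have pd := ippos d.
  have h1 : ip d d * ip w w <= t * ip w w by apply: ler_wpM2r => //; apply: ltW.
  have h2 : K * ip d d <= K * t by apply: ler_wpM2l => //; apply: ltW.
  have h3 : 0 <= t * K by apply: mulr_ge0 => //; apply: ltW.
  have [b1 b2] : - eps <= 2 * ip d w /\ 2 * ip d w <= eps.
    apply: sq_le => //; rewrite -ht exprMn; lra.
  have [b3 b4] : - eps <= 2 * L d /\ 2 * L d <= eps.
    apply: sq_le => //; rewrite -ht exprMn; nra.
  rewrite /eps in b1 b2 b3 b4 hn *; lra.
exists w => u.
apply/eqP; rewrite -subr_eq0; apply/eqP.
apply: (quad0 _ _ (ippos u)) => r.
have := le_trans Fw (mle (r *: u + w)); rewrite Fexp !(bZl ip ipsym iplin) (bZr ip ipsym iplin) LZ.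
nra.
Qed.
End riesz.

Section probB.
Context {R : realType} {H : lmodType R} (ip : H -> H -> R)
  {dX : measure_display} {TX : measurableType dX} (phi : TX -> H)
  {dO : measure_display} {Om : measurableType dO} (P : probability Om R)
  (X : Om -> TX).
Hypothesis hip : inner_product ip.
Hypothesis L2 : forall u, (fun w => ip (phi (X w)) u) \in Lfun P 2%:E.
Hypothesis intK : P.-integrable setT (fun w => (ip (phi (X w)) (phi (X w)))%:E).

Let ipsym : forall u v, ip u v = ip v u. Proof. by case: hip. Qed.
Let iplin : forall (c : R) u v w, ip (c *: u + v) w = c * ip u w + ip v w.
Proof. by case: hip. Qed.
Let ippos : forall u, 0 <= ip u u. Proof. by case: hip. Qed.

Definition Phi u := fun w => ip (phi (X w)) u.
Definition B u v := fine (covariance P (Phi u) (Phi v)).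

Let Pfin : P setT \is a fin_num := fin_num_measure P _ measurableT.

Lemma Phi_lin c u v : Phi (c *: u + v) = (c \o* Phi u) \+ Phi v.
Proof. by apply/funext => w; rewrite /Phi /= (bDr ip ipsym iplin) (bZr ip ipsym iplin) mulrC. Qed.

Lemma cov_fin u v : covariance P (Phi u) (Phi v) \is a fin_num.
Proof.
apply: covariance_fin_num.
- exact: (Lfun_subset12 Pfin (L2 u)).
- exact: (Lfun_subset12 Pfin (L2 v)).
- exact: (Lfun2_mul_Lfun1 (L2 u) (L2 v)).
Qed.

Lemma Bsym u v : B u v = B v u.
Proof. by rewrite /B covarianceC. Qed.

Lemma Blin c u v w : B (c *: u + v) w = c * B u w + B v w.
Proof.
rewrite /B Phi_lin covarianceDl; last 3 first.
- by apply: Lfun_scale => //; [rewrite ler1n | exact: (L2 u)].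
- exact: L2.
- exact: L2.
rewrite covarianceZl; last 3 first.
- exact: (Lfun_subset12 Pfin (L2 u)).
- exact: (Lfun_subset12 Pfin (L2 w)).
- exact: (Lfun2_mul_Lfun1 (L2 u) (L2 w)).
by rewrite -(fineK (cov_fin u w)) -(fineK (cov_fin v w)) -EFinM -EFinD.
Qed.

Lemma Bpsd u : 0 <= B u u.
Proof. by apply: fine_ge0; apply: variance_ge0. Qed.

Lemma varB u : 'V_P[Phi u] = (B u u)%:E.
Proof. by rewrite /B fineK //; apply: cov_fin. Qed.

Definition Cst := fine 'E_P[fun w => ip (phi (X w)) (phi (X w))].

Lemma Cst_ge0 : 0 <= Cst.
Proof. by apply: fine_ge0; apply: expectation_ge0 => w. Qed.

Hypothesis mPhi : forall u, measurable_fun setT (fun w => ip (phi (X w)) u).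

Lemma Bbound u : B u u <= Cst * ip u u.
Proof.
set f := Phi u.
set Kf := fun w => ip (phi (X w)) (phi (X w)).
have K1 : Kf \in Lfun P 1 by apply/Lfun1_integrable.
have mK : measurable_fun setT Kf by have /integrableP[/measurable_realfun.measurable_EFinP] := intK.
have mf : measurable_fun setT f := mPhi u.
have f2 : (f ^+ 2) \in Lfun P 1 := Lfun2_mul_Lfun1 (L2 u) (L2 u).
have e2fin := expectation_fin_num f2.
have e1fin := expectation_fin_num (Lfun_subset12 Pfin (L2 u)).
have Kfin := expectation_fin_num K1.
have hV := varianceE (L2 u).
have hle : ('E_P[f ^+ 2] <= 'E_P[ip u u \o* Kf])%E.
  apply: expectation_le.
  - exact: measurable_realfun.measurable_funM.
  - exact: measurable_realfun.measurable_funM.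
  - by move=> x; exact: sqr_ge0.
  - by move=> x; apply: mulr_ge0; [exact: ippos|exact: ippos].
  - apply: aeW => x /=.
    have := bCS ip ipsym iplin ippos (phi (X x)) u.
    by rewrite expr2 mulrC.
rewrite expectationZl // -(fineK e2fin) -(fineK Kfin) -EFinM lee_fin in hle.
rewrite /B -[covariance P f f]/('V_P[f]) hV -(fineK e2fin) -(fineK e1fin).
rewrite -EFin_expe -EFinB /=.
have := sqr_ge0 (fine 'E_P[f]); rewrite /Cst -/Kf mulrC; lra.
Qed.

Hypothesis hcomp : ip_complete ip.

Lemma Bcs u v : B u v ^+ 2 <= B u u * B v v.
Proof. exact: (bCS B Bsym Blin Bpsd). Qed.

Lemma rank1 b : exists M : {linear H -> H}, forall u v, ip u (M v) = B u b * B v b / B b b.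
Proof.
have Lb u : B u b ^+ 2 <= (Cst * B b b) * ip u u.
  apply: (le_trans (Bcs u b)); rewrite mulrAC; apply: ler_wpM2r; first exact: Bpsd.
  exact: Bbound.
have K0 : 0 <= Cst * B b b by apply: mulr_ge0; [exact: Cst_ge0|exact: Bpsd].
have [w hw] := riesz ip hip hcomp (fun u => B u b) (fun c u v => Blin c u v b) _ K0 Lb.
pose f := fun v => (B v b / B b b) *: w.
have flin : linear_for *:%R f.
  by move=> c u v; rewrite /f Blin mulrDl scalerDl scalerA mulrA.
exists (HB.pack_for {linear H -> H} f (GRing.isLinear.Build R H H *:%R f flin)).
by move=> u v /=; rewrite /f (bZr ip ipsym iplin) hw mulrC mulrA.
Qed.

Hypothesis reg : regular P ip X phi.

Lemma key b : exists (dZ : measure_display) (TZ : measurableType dZ) (Z : Om -> TZ),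
  representation P X Z /\ forall v, condvar_is P Z (Phi v) (B v b ^+ 2 / B b b).
Proof.
have [M hM] := rank1 b.
have h1 : forall u v, ip u (M v) = ip (M u) v.
  by move=> u v; rewrite hM ipsym hM [B u b * _]mulrC.
have h2 : forall u, 0 <= ip u (M u).
  by move=> u; rewrite hM -expr2; apply: mulr_ge0; [exact: sqr_ge0|rewrite invr_ge0; exact: Bpsd].
have h3 : forall u, ((ip u (M u))%:E <= 'V_P[fun w => ip (phi (X w)) u])%E.
  move=> u; rewrite hM (varB u) lee_fin -expr2.
  have [->|bb0] := eqVneq (B b b) 0; first by rewrite invr0 mulr0; exact: Bpsd.
  have bbp : 0 < B b b by rewrite lt_def bb0 Bpsd.
  by rewrite ler_pdivrMr //; apply: Bcs.
have [dZ [TZ [Z [rep [h [hce hcov]]]]]] := reg M h1 h2 h3.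
exists dZ, TZ, Z; split => // v.
exists (h v); split; first exact: hce v.
by rewrite /variance hcov hM expr2.
Qed.

Lemma sqr_div_self (x : R) : x ^+ 2 / x = x.
Proof.
have [->|x0] := eqVneq x 0; first by rewrite invr0 mulr0.
by rewrite expr2 mulfK.
Qed.

Variables (a y : H).
Hypothesis VYp : 0 < B y y.
Hypothesis VAp : 0 < B a a.

Lemma core :
  let VY := B y y in
  let VA := B a a in
  let rho := B y a / Num.sqrt (VY * VA) in
  [/\ (exists (dZ : measure_display) (TZ : measurableType dZ) (Z : Om -> TZ),
         [/\ representation P X Z, condvar_is P Z (Phi a) 0
           & condvar_is P Z (Phi y) (VY * (1 - rho ^+ 2))]),
      (exists (dZ : measure_display) (TZ : measurableType dZ) (Z : Om -> TZ),
         [/\ representation P X Z, condvar_is P Z (Phi y) VY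
           & condvar_is P Z (Phi a) (VA * rho ^+ 2)])
    & (forall lam : R, 0 <= lam ->
         exists (dZ : measure_display) (TZ : measurableType dZ) (Z : Om -> TZ)
                (vA vY : R),
           [/\ representation P X Z, condvar_is P Z (Phi a) vA, condvar_is P Z (Phi y) vY
             & lam * vA - vY =
               2^-1 * (lam * VA - VY
                 - Num.sqrt (VY ^+ 2 + lam ^+ 2 * VA ^+ 2
                             - 2 * lam * VA * VY * (2 * rho ^+ 2 - 1)))])].
Proof.
move=> VY VA rho.
pose c := B y a.
have VY0 : VY != 0 by rewrite gt_eqF.
have VA0 : VA != 0 by rewrite gt_eqF.
have rho2 : rho ^+ 2 = c ^+ 2 / (VY * VA).
  by rewrite /rho expr_div_n sqr_sqrtr // mulr_ge0 // ltW.
have cs : c ^+ 2 <= VY * VA by apply: Bcs.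
have bDl' := bDl B Bsym Blin; have bDr' := bDr B Bsym Blin.
have bZl' := bZl B Bsym Blin; have bZr' := bZr B Bsym Blin.
have bBl' := bBl B Bsym Blin; have bBr' := bBr B Bsym Blin.
split.
- pose b := y - (c / VA) *: a.
  have Bab : B a b = 0.
    by rewrite /b bBr' bZr' Bsym -/c -/VA mulfVK // subrr.
  have Byb : B y b = B b b.
    by rewrite {2}/b bBl' bZl' Bab mulr0 subr0.
  have Bbb : B b b = VY - c ^+ 2 / VA.
    by rewrite -Byb /b bBr' bZr' -/c -/VY; field.
  have [dZ [TZ [Z [rep hv]]]] := key b.
  exists dZ, TZ, Z; split => //.
  + by have := hv a; rewrite Bab expr2 !mul0r.
  + have := hv y; rewrite Byb sqr_div_self.
    suff -> : VY * (1 - rho ^+ 2) = B b b by [].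
    by rewrite rho2 Bbb; field; rewrite ?VA0 ?VY0.
- have [dZ [TZ [Z [rep hv]]]] := key y.
  exists dZ, TZ, Z; split => //.
  + by have := hv y; rewrite sqr_div_self.
  + have := hv a; suff -> : B a y ^+ 2 / B y y = VA * rho ^+ 2 by [].
    by rewrite rho2 Bsym -/c -/VY; field; rewrite ?VA0 ?VY0.
move=> lam lam0.
set D := VY ^+ 2 + lam ^+ 2 * VA ^+ 2 - 2 * lam * VA * VY * (2 * rho ^+ 2 - 1).
have Deq : D = (lam * VA - VY) ^+ 2 + 4 * lam * (VA * VY - c ^+ 2).
  by rewrite /D rho2; field; rewrite ?VA0 ?VY0.
have D0 : 0 <= D.
  rewrite Deq; apply: addr_ge0; first exact: sqr_ge0.
  by apply: mulr_ge0; [apply: mulr_ge0 | rewrite subr_ge0 mulrC].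
set sD := Num.sqrt D.
have sD2 : sD ^+ 2 = D by rewrite sqr_sqrtr.
have sD0 : 0 <= sD by apply: sqrtr_ge0.
set mu := 2^-1 * (lam * VA - VY - sD).
have hmu : mu = (lam * VA - VY - sD) / 2 by rewrite /mu mulrC.
have hquad : mu ^+ 2 - (lam * VA - VY) * mu + lam * c ^+ 2 - lam * VA * VY = 0.
  rewrite hmu.
  have -> : ((lam * VA - VY - sD) / 2) ^+ 2 - (lam * VA - VY) * ((lam * VA - VY - sD) / 2)
     + lam * c ^+ 2 - lam * VA * VY
     = (sD ^+ 2 - (lam * VA - VY) ^+ 2) / 4 + lam * c ^+ 2 - lam * VA * VY by field.
  by rewrite sD2 Deq; field.
have s2p : 0 < lam * VA - mu.
  have h2 : 2 * mu = lam * VA - VY - sD by rewrite hmu; field.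
  have : 0 <= lam * VA by apply: mulr_ge0 => //; apply: ltW.
  have VYp' : 0 < VY := VYp.
  lra.
pose b := (- (lam * c)) *: a + (lam * VA - mu) *: y.
have Bab : B a b = - c * mu.
  by rewrite /b bDr' !bZr' (Bsym a y) -/c -/VA; ring.
have Byb : B y b = - mu * (lam * VA - mu).
  rewrite /b bDr' !bZr' -/c -/VY.
  apply/eqP; rewrite -subr_eq0; apply/eqP; rewrite -[RHS]oppr0 -hquad; ring.
have Bbb : B b b = (- (lam * c)) * B a b + (lam * VA - mu) * B y b.
  by rewrite {1}/b bDl' !bZl'.
have [dZ [TZ [Z [rep hv]]]] := key b.
exists dZ, TZ, Z, (B a b ^+ 2 / B b b), (B y b ^+ 2 / B b b); split => //.
have [bb0|bb0] := eqVneq (B b b) 0.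
  have Byb0 : B y b = 0.
    have := Bcs y b; rewrite bb0 mulr0 => h.
    by apply/eqP; rewrite -sqrf_eq0 eq_le h sqr_ge0.
  have mu0 : mu = 0.
    move: Byb; rewrite Byb0 => /esym/eqP; rewrite mulf_eq0 oppr_eq0 (gt_eqF s2p) orbF.
    by move/eqP.
  by rewrite bb0 invr0 !mulr0 subr0 -/mu mu0.
rewrite -/mu.
rewrite mulrA -mulrBl.
have -> : lam * B a b ^+ 2 - B y b ^+ 2 = mu * B b b by rewrite [in RHS]Bbb Bab Byb; ring.
by rewrite mulfK.
Qed.

End probB.

Theorem theorem8 (R : realType) (H : lmodType R) (ip : H -> H -> R)
  (dX : measure_display) (TX : measurableType dX)
  (ev : H -> TX -> R) (phi : TX -> H)
  (dO : measure_display) (Om : measurableType dO) (P : probability Om R)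
  (X : Om -> TX) (Y A : Om -> R) (y a : H) :
  RKHS ip ev phi ->
  measurable_fun setT X ->
  (forall u, measurable_fun setT (fun w => ip (phi (X w)) u)) ->
  (forall u, (fun w => ip (phi (X w)) u) \in Lfun P 2%:E) ->
  P.-integrable setT (fun w => (ip (phi (X w)) (phi (X w)))%:E) ->
  Y = (fun w => ip (phi (X w)) y) ->
  A = (fun w => ip (phi (X w)) a) ->
  y != 0 -> a != 0 ->
  (0 < 'V_P[Y])%E -> (0 < 'V_P[A])%E ->
  regular P ip X phi ->
  let VY := fine 'V_P[Y] in
  let VA := fine 'V_P[A] in
  let rho := fine (covariance P Y A) / Num.sqrt (VY * VA) in
  [/\ (exists (dZ : measure_display) (TZ : measurableType dZ) (Z : Om -> TZ),
         [/\ representation P X Z, condvar_is P Z A 0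
           & condvar_is P Z Y (VY * (1 - rho ^+ 2))]),
      (exists (dZ : measure_display) (TZ : measurableType dZ) (Z : Om -> TZ),
         [/\ representation P X Z, condvar_is P Z Y VY
           & condvar_is P Z A (VA * rho ^+ 2)])
    & (forall lam : R, 0 <= lam ->
         exists (dZ : measure_display) (TZ : measurableType dZ) (Z : Om -> TZ)
                (vA vY : R),
           [/\ representation P X Z, condvar_is P Z A vA, condvar_is P Z Y vY
             & lam * vA - vY =
               2^-1 * (lam * VA - VY
                 - Num.sqrt (VY ^+ 2 + lam ^+ 2 * VA ^+ 2
                             - 2 * lam * VA * VY * (2 * rho ^+ 2 - 1)))])].
Proof.
case=> [[hip hcomp] _ _ _] mX mPhi L2 intK -> -> y0 a0 VYp VAp reg.
have VYp' : 0 < B ip phi P X y y by rewrite -lte_fin -(varB ip phi P X L2).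
have VAp' : 0 < B ip phi P X a a by rewrite -lte_fin -(varB ip phi P X L2).
exact: (core ip phi P X hip L2 intK mPhi hcomp reg a y VYp' VAp').
Qed.
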